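(* Let $B_{z,z'}:\Lambda\to\Lambda$ be the linear operator defined on the basis of Schur functions by $$B_{z,z'}s_\mu=-|\mu|(|\mu|-1+zz')s_\mu+p_1\sum_{\mu_\bullet\nearrow\mu}(z)_{\mu/\mu_\bullet}(z')_{\mu/\mu_\bullet}s_{\mu_\bullet}.$$ Then $B_{z,z'}$ preserves the principal ideal of $\Lambda$ generated by $p_1-1$, and the induced operator on $\Lambda^\circ=\Lambda/(p_1-1)$ is given by $s^\circ_\mu\mapsto-m(m-1+zz')s^\circ_\mu+\sum_{\mu_\bullet\nearrow\mu}(z)_{\mu/\mu_\bullet}(z')_{\mu/\mu_\bullet}s^\circ_{\mu_\bullet}$, $m=|\mu|$.
   Context: $\Lambda=\mathbb R[p_1,p_2,\dots]$ is the algebra of symmetric functions over $\mathbb R$ with power sums $p_k$ and Schur functions $s_\mu$ indexed by Young diagrams $\mu$ (including $\varnothing$); $\Lambda^\circ=\Lambda/(p_1-1)$ and $f^\circ$ denotes the image of $f$. $\mu_\bullet\nearrow\mu$ means $\mu_\bullet\subset\mu$ with $|\mu|=|\mu_\bullet|+1$; $(z)_\theta=\prod_{(i,j)\in\theta}(z+j-i)$ for a skew diagram $\theta$ ($(i,j)$ = row $i$, column $j$). $(z,z')$ is fixed in the principal series ($z\notin\mathbb R$, $z'=\bar z$) or complementary series ($z,z'\in(N,N+1)$, $N\in\mathbb Z$), so the coefficients are real. *)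

(* Defs.v *)
From HB Require Import structures.
From mathcomp Require Import all_boot all_order all_algebra.
From mathcomp Require Export complex.
Set Implicit Arguments. Unset Strict Implicit. Unset Printing Implicit Defensive.
Import Order.TTheory GRing.Theory Num.Theory.
Local Open Scope ring_scope.

(* A Young diagram = a partition: a non-increasing list of positive naturals
   (row lengths, rows numbered from 1). The empty diagram is [::]. *)
Definition is_part (s : seq nat) : bool :=
  sorted (fun a b => (b <= a)%N) s && all (fun a => (0 < a)%N) s.

Definition psize (s : seq nat) : nat := sumn s.

Definition subdiag (m n : seq nat) : bool :=
  all (fun i => (nth 0 m i <= nth 0 n i)%N) (iota 0 (size m)).

Definition covers (m n : seq nat) : bool :=
  [&& is_part m, is_part n, subdiag m n & psize n == (psize m).+1]%N.

(* candidate lists (supersets of the true neighbour sets; the sums below are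
   filtered by [covers], so only the genuine neighbours contribute) *)
Definition rm_cands (n : seq nat) : seq (seq nat) :=
  undup [seq filter (fun a => (0 < a)%N) (set_nth 0 n i (nth 0 n i).-1)
        | i <- iota 0 (size n)].
Definition add_cands (m : seq nat) : seq (seq nat) :=
  undup [seq set_nth 0 m i (nth 0 m i).+1 | i <- iota 0 (size m).+1].

(* cells (i,j) (row i, column j, 1-indexed) of the skew diagram n/m *)
Definition skew_cells (n m : seq nat) : seq (nat * nat) :=
  flatten [seq [seq (i.+1, j.+1) | j <- iota (nth 0 m i) (nth 0 n i - nth 0 m i)]
          | i <- iota 0 (size n)].

Definition poch (R : rcfType) (z : R[i]) (n m : seq nat) : R[i] :=
  \prod_(c <- skew_cells n m) (z + (c.2)%:R - (c.1)%:R).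

(* An element of Lambda (over R) is encoded by its coefficient function
   f : seq nat -> R, f mu = coefficient of s_mu; it must vanish off Young
   diagrams and have finite support. *)
Definition inLam (R : rcfType) (f : seq nat -> R) : Prop :=
  (forall s, ~~ is_part s -> f s = 0) /\
  exists S : seq (seq nat), forall s, f s != 0 -> s \in S.

Definition schur (R : rcfType) (mu : seq nat) : seq nat -> R :=
  fun nu => (nu == mu)%:R.

(* multiplication by p_1 = s_(1), via the Pieri rule p_1 s_mu = sum_{mu ↗ nu} s_nu,
   written coefficientwise *)
Definition p1mul (R : rcfType) (f : seq nat -> R) : seq nat -> R :=
  fun nu => \sum_(m <- rm_cands nu | covers m nu) f m.

Definition p1m1 (R : rcfType) (f : seq nat -> R) : seq nat -> R :=
  fun nu => p1mul f nu - f nu.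

Definition inIdeal (R : rcfType) (f : seq nat -> R) : Prop :=
  exists h, inLam h /\ forall nu, f nu = p1m1 h nu.

(* coefficient (z)_{mu/mub} (z')_{mu/mub}  (real under the standing hypotheses) *)
Definition Bcoef (R : rcfType) (z z' : R[i]) (mu mub : seq nat) : R :=
  complex.Re (poch z mu mub * poch z' mu mub).

(* B_{z,z'} on Lambda, i.e. the linear extension of
   s_mu |-> -|mu|(|mu|-1+zz') s_mu + p_1 sum_{mub ↗ mu} Bcoef mu mub s_mub,
   written coefficientwise. *)
Definition Bop (R : rcfType) (z z' : R[i]) (f : seq nat -> R) : seq nat -> R :=
  let g := fun mub => \sum_(m <- add_cands mub | covers mub m) Bcoef z z' m mub * f m in
  fun nu => - (psize nu)%:R * ((psize nu)%:R - 1 + complex.Re (z * z')) * f nu + p1mul g nu.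

(* the claimed image of s°_mu in Lambda° (lifted to Lambda):
   -m(m-1+zz') s_mu + sum_{mub ↗ mu} Bcoef mu mub s_mub *)
Definition Bcirc_image (R : rcfType) (z z' : R[i]) (mu : seq nat) : seq nat -> R :=
  fun nu => - (psize mu)%:R * ((psize mu)%:R - 1 + complex.Re (z * z')) * schur R mu nu
            + \sum_(m <- rm_cands mu | covers m mu) Bcoef z z' mu m * schur R m nu.

Definition admissible (R : rcfType) (z z' : R[i]) : Prop :=
  (complex.Im z != 0 /\ z' = conjc z) \/
  (exists N : int, complex.Im z = 0 /\ complex.Im z' = 0 /\
     N%:~R < complex.Re z < (N + 1)%:~R /\ N%:~R < complex.Re z' < (N + 1)%:~R).

(* Main.v *)
Require Import Defs.
From mathcomp Require Import all_boot all_order all_algebra.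
From mathcomp Require Import ring lra zify.
Import GRing.Theory Num.Theory.
Set Implicit Arguments. Unset Strict Implicit.

Local Notation "s ## k" := (nth 0%N s k) (at level 8).

Lemma part_intro (s : seq nat) :
  (forall k, (k.+1 < size s)%N -> (s ## k.+1 <= s ## k)%N) ->
  (forall k, (k < size s)%N -> (0 < s ## k)%N) -> is_part s.
Proof.
move=> H1 H2; apply/andP; split; first exact/(sortedP 0%N).
exact/(all_nthP 0%N).
Qed.

Lemma part_pos (s : seq nat) k : is_part s -> (0 < s ## k)%N = (k < size s)%N.
Proof.
case/andP=> _ /(all_nthP 0%N) H.
case: (ltnP k (size s)) => hk; first by rewrite H.
by rewrite nth_default.
Qed.

Lemma part_desc (s : seq nat) k : is_part s -> (s ## k.+1 <= s ## k)%N.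
Proof.
case/andP=> /(sortedP 0%N) H _.
case: (ltnP k.+1 (size s)) => hk; first exact: H.
by rewrite (nth_default _ hk).
Qed.

Lemma part_ext (s t : seq nat) : is_part s -> is_part t ->
  (forall k, s ## k = t ## k) -> s = t.
Proof.
move=> ps pt H.
have Hs : size s = size t.
  apply/eqP; rewrite eqn_leq; apply/andP; split.
  - case: (posnP (size s)) => [->//|hs].
    have := part_pos (size s).-1 ps; rewrite H part_pos // => e.
    have : ((size s).-1 < size s)%N by lia.
    rewrite -e; lia.
  - case: (posnP (size t)) => [->//|ht].
    have := part_pos (size t).-1 pt; rewrite -H part_pos // => e.
    have : ((size t).-1 < size t)%N by lia.
    rewrite -e; lia.
apply: (eq_from_nth (x0:=0%N)) Hs _ => i _; exact: H.
Qed.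

Lemma part_desc_le (s : seq nat) i j : is_part s -> (i <= j)%N -> (s ## j <= s ## i)%N.
Proof.
move=> ps /subnKC <-; elim: (j - i)%N => [|d IH]; first by rewrite addn0.
rewrite addnS; exact: leq_trans (part_desc _ ps) IH.
Qed.

Definition inc (s : seq nat) i := set_nth 0%N s i (s ## i).+1.
Definition dec (s : seq nat) j := filter (fun a => 0 < a)%N (set_nth 0%N s j (s ## j).-1).
Definition add_ok (s : seq nat) i := (i == 0)%N || (s ## i < s ## i.-1)%N.
Definition rm_ok (s : seq nat) j := (s ## j.+1 < s ## j)%N.

Lemma inc_nth s i k : (inc s i) ## k = (s ## k + (k == i))%N.
Proof. rewrite /inc nth_set_nth /=; case: eqP => [->|]; lia. Qed.

Lemma size_inc s i : size (inc s i) = maxn i.+1 (size s).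
Proof. by rewrite size_set_nth. Qed.

Lemma filter_pos_nth (s : seq nat) k :
  (forall k, (s ## k.+1 <= s ## k)%N) -> (filter (fun a => 0 < a)%N s) ## k = s ## k.
Proof.
elim: s k => [|a s IH] k H //=.
have Hs : forall k, (s ## k.+1 <= s ## k)%N by move=> k'; exact: (H k'.+1).
case: (posnP a) => [a0|apos].
- have z : forall k, s ## k = 0%N.
    move=> k'; elim: k' => [|k' IHk]; first by have := H 0%N; rewrite a0 /=; lia.
    by have := Hs k'; rewrite IHk; lia.
  by rewrite a0 /= IH // z; case: k => [|k] //=; rewrite z.
- case: k => [|k] //=; exact: IH.
Qed.

Lemma filter_pos_part (s : seq nat) :
  (forall k, (s ## k.+1 <= s ## k)%N) -> is_part (filter (fun a => 0 < a)%N s).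
Proof.
move=> H; apply/andP; split; last by apply/allP => x; rewrite mem_filter => /andP[].
apply: sorted_filter; first by move=> a b c; lia.
apply/(sortedP 0%N) => i _; exact: H.
Qed.

Lemma dec_nth s j k : is_part s -> rm_ok s j -> (dec s j) ## k = (s ## k - (k == j))%N.
Proof.
move=> ps hj; rewrite /dec filter_pos_nth.
  by rewrite nth_set_nth /=; case: eqP => [->|]; lia.
move=> k'; rewrite !nth_set_nth /=; have := part_desc k' ps; have := part_desc k'.+1 ps.
move: hj; rewrite /rm_ok.
by case: eqP => e1; case: eqP => e2; subst; lia.
Qed.

Lemma dec_part s j : is_part s -> rm_ok s j -> is_part (dec s j).
Proof.
move=> ps hj; apply: filter_pos_part => k'.
rewrite !nth_set_nth /=; have := part_desc k' ps; have := part_desc k'.+1 ps.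
move: hj; rewrite /rm_ok.
by case: eqP => e1; case: eqP => e2; subst; lia.
Qed.

Lemma add_ok_size s i : is_part s -> add_ok s i -> (i <= size s)%N.
Proof.
move=> ps; rewrite /add_ok; case: i => [//|i] /= h.
rewrite -(part_pos _ ps); lia.
Qed.

Lemma inc_part s i : is_part s -> add_ok s i -> is_part (inc s i).
Proof.
move=> ps hi; have hsz := add_ok_size ps hi.
apply: part_intro => k hk.
- rewrite !inc_nth; have := part_desc k ps; move: hi; rewrite /add_ok.
  case: (k =P i) => [->|]; case: (k.+1 =P i) => [<-|] /=; lia.
- rewrite inc_nth; move: hk; rewrite size_inc => hk.
  case: (k =P i) => [->|ne]; first lia.
  rewrite addn0 part_pos //; lia.
Qed.
Lemma sumn_big (s : seq nat) N : (size s <= N)%N -> sumn s = (\sum_(k < N) s ## k)%N.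
Proof.
elim: s N => [|a s IH] N /=; first by move=> _; rewrite big1 // => k; rewrite nth_nil.
case: N => [//|N] hN; rewrite big_ord_recl /= (IH N) //.
Qed.

Lemma sum_eqi N i : (\sum_(k < N) ((k : nat) == i : nat) = (i < N))%N.
Proof.
elim: N => [|N IH]; first by rewrite big_ord0.
rewrite big_ord_recr /= IH; case: (ltngtP i N) => h; try lia.
Qed.

Lemma covers_char m n : is_part m -> is_part n ->
  covers m n <-> exists i, forall k, n ## k = (m ## k + (k == i))%N.
Proof.
move=> pm pn; split.
- case/and4P=> _ _ hsub /eqP hsz.
  have le : forall k, (m ## k <= n ## k)%N.
    move=> k; case: (ltnP k (size m)) => hk; last by rewrite nth_default.
    by move/allP: hsub; apply; rewrite mem_iota.
  pose N := (size m + size n)%N.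
  have hd : (\sum_(k < N) (n ## k - m ## k) = 1)%N.
    move: hsz; rewrite /psize (@sumn_big n N) ?(@sumn_big m N); try lia.
    have -> : (\sum_(k < N) n ## k = \sum_(k < N) (m ## k + (n ## k - m ## k)))%N.
      by apply: eq_bigr => k _; have := le k; lia.
    rewrite big_split /=; lia.
  have [i hi] : exists i : 'I_N, (n ## i - m ## i != 0)%N.
    apply/existsP; apply: contraT; rewrite negb_exists => /forallP H.
    move: hd; rewrite big1 // => k _; apply/eqP; move: (H k); by rewrite negbK.
  move: hd; rewrite (bigD1 i) //=; set S := bigop _ _ _ => hd.
  have hr : (S == 0)%N by lia.
  move: hr; rewrite /S sum_nat_eq0 => /forallP hr.
  exists i => k; case: (ltnP k N) => hk.
  + have := hr (Ordinal hk); rewrite /= -(inj_eq val_inj) /=.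
    case: eqP => [->|] /=; have := le k; lia.
  + rewrite !nth_default; try lia.
    have : (i < N)%N := ltn_ord i. case: eqP; lia.
- case=> i H; apply/and4P; split => //.
  + apply/allP => k _; rewrite H; lia.
  + pose N := (size m + size n + i.+1)%N.
    rewrite /psize (@sumn_big n N) ?(@sumn_big m N); try lia.
    rewrite (eq_bigr (fun k : 'I_N => m ## k + ((k : nat) == i))%N); last by move=> k _; rewrite H.
    by rewrite big_split /= sum_eqi; apply/eqP; lia.
Qed.

Lemma covers_part m n : covers m n -> is_part m /\ is_part n.
Proof. by case/and4P. Qed.

Lemma covers_inc s i : is_part s -> add_ok s i -> covers s (inc s i).
Proof.
move=> ps hi; apply/(covers_char ps (inc_part ps hi)); exists i => k; exact: inc_nth.
Qed.

Lemma covers_dec s j : is_part s -> rm_ok s j -> covers (dec s j) s.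
Proof.
move=> ps hj; apply/(covers_char (dec_part ps hj) ps); exists j => k.
rewrite dec_nth //; case: eqP => [->|]; last lia.
have : (0 < s ## j)%N by move: hj; rewrite /rm_ok; lia.
lia.
Qed.

Lemma covers_add_inv m n : covers m n -> exists i, [/\ add_ok m i, n = inc m i & (i <= size m)%N].
Proof.
move=> hc; have [pm pn] := covers_part hc.
have [i H] := (covers_char pm pn).1 hc.
have hi : add_ok m i.
  rewrite /add_ok; case: i H => [//|i] H /=.
  have := part_desc i pn; rewrite !H; repeat case: eqP => ?; lia.
exists i; split => //; last exact: add_ok_size.
apply: part_ext => // [|k]; first exact: inc_part.
by rewrite H inc_nth.
Qed.

Lemma rm_ok_size s j : is_part s -> rm_ok s j -> (j < size s)%N.
Proof. move=> ps hj; rewrite -(part_pos _ ps); move: hj; rewrite /rm_ok; lia. Qed.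

Lemma covers_rm_inv m n : covers m n -> exists j, [/\ rm_ok n j, m = dec n j & (j < size n)%N].
Proof.
move=> hc; have [pm pn] := covers_part hc.
have [j H] := (covers_char pm pn).1 hc.
have hj : rm_ok n j.
  rewrite /rm_ok !H; have := part_desc j pm; repeat case: eqP => ?; lia.
exists j; split => //; last exact: rm_ok_size.
apply: part_ext => // [|k]; first exact: dec_part.
by rewrite dec_nth // H; lia.
Qed.
Local Open Scope ring_scope.

Lemma inc_inj s : injective (inc s).
Proof.
move=> i i' e; have := congr1 (fun l => l ## i) e; rewrite /= !inc_nth eqxx.
case: eqP => //; lia.
Qed.

Lemma add_sum (R : rcfType) (G : seq nat -> R) s N : is_part s -> (size s < N)%N ->
  \sum_(m <- add_cands s | covers s m) G m = \sum_(i < N | add_ok s i) G (inc s i).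
Proof.
move=> ps hN; rewrite -big_filter.
rewrite (perm_big [seq inc s i | i <- filter (add_ok s) (iota 0 N)]).
  by rewrite big_map big_filter -(big_mkord (add_ok s) (fun i => G (inc s i))) /index_iota subn0.
apply: uniq_perm.
- by rewrite filter_uniq // undup_uniq.
- by rewrite (map_inj_uniq (@inc_inj s)) filter_uniq // iota_uniq.
move=> x; rewrite mem_filter; apply/idP/idP.
- case/andP=> hc _; have [i [hi -> hs]] := covers_add_inv hc.
  by apply/mapP; exists i => //; rewrite mem_filter mem_iota hi /=; lia.
- case/mapP => i; rewrite mem_filter mem_iota => /andP[hi _] ->.
  rewrite covers_inc // mem_undup; apply/mapP; exists i => //.
  rewrite mem_iota /=; have := add_ok_size ps hi; lia.
Qed.

Lemma rm_sum (R : rcfType) (G : seq nat -> R) s N : is_part s -> (size s <= N)%N ->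
  \sum_(m <- rm_cands s | covers m s) G m = \sum_(j < N | rm_ok s j) G (dec s j).
Proof.
move=> ps hN; rewrite -big_filter.
rewrite (perm_big [seq dec s j | j <- filter (rm_ok s) (iota 0 N)]).
  by rewrite big_map big_filter -(big_mkord (rm_ok s) (fun i => G (dec s i))) /index_iota subn0.
apply: uniq_perm.
- by rewrite filter_uniq // undup_uniq.
- rewrite map_inj_in_uniq ?filter_uniq ?iota_uniq //.
  move=> j j'; rewrite !mem_filter => /andP[hj _] /andP[hj' _] e.
  have := congr1 (fun l => l ## j) e; rewrite /= !dec_nth // eqxx.
  move: hj; rewrite /rm_ok; case: eqP => //; lia.
move=> x; rewrite mem_filter; apply/idP/idP.
- case/andP=> hc _; have [j [hj -> hs]] := covers_rm_inv hc.
  by apply/mapP; exists j => //; rewrite mem_filter mem_iota hj /=; lia.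
- case/mapP => j; rewrite mem_filter mem_iota => /andP[hj _] ->.
  rewrite covers_dec // mem_undup; apply/mapP; exists j => //.
  rewrite mem_iota /=; exact: rm_ok_size.
Qed.

Lemma covers_mem_add m n : covers m n -> n \in add_cands m.
Proof.
move=> hc; have [i [hi -> hs]] := covers_add_inv hc.
rewrite mem_undup; apply/mapP; exists i => //; rewrite mem_iota; lia.
Qed.

Lemma covers_mem_rm m n : covers m n -> m \in rm_cands n.
Proof.
move=> hc; have [j [hj -> hs]] := covers_rm_inv hc.
rewrite mem_undup; apply/mapP; exists j => //; rewrite mem_iota; lia.
Qed.

Definition Fq (R : rcfType) (z z' : R[i]) (x : R) : R :=
  complex.Re (z * z') + x * (complex.Re z + complex.Re z') + x ^+ 2.

Lemma Re_quad (R : rcfType) (z z' : R[i]) (x : R) :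
  complex.Re ((z + real_complex R x) * (z' + real_complex R x)) = Fq z z' x.
Proof. rewrite /Fq; case: z => a b; case: z' => c d /=. ring. Qed.

Lemma poch_single (R : rcfType) (z : R[i]) n m i : (forall k, n ## k = (m ## k + (k == i))%N) ->
  (i < size n)%N -> poch z n m = z + real_complex R ((m ## i)%:R - i%:R).
Proof.
move=> H hi; rewrite /poch /skew_cells -[(0%R : nat)]/0%N big_flatten /= big_map.
rewrite (bigD1_seq i) ?mem_iota ?iota_uniq //= [X in _ * X]big1 ?mulr1.
  rewrite H eqxx addKn /= big_seq1 /= rmorphB !rmorph_nat -addrA; congr (_ + _).
  rewrite -!natr1; ring.
move=> r hr; rewrite H (negbTE hr) addn0 subnn /=.
by rewrite big_nil.
Qed.

Lemma Bcoef_single (R : rcfType) (z z' : R[i]) n m i : (forall k, n ## k = (m ## k + (k == i))%N) ->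
  (i < size n)%N -> Bcoef z z' n m = Fq z z' ((m ## i)%:R - i%:R).
Proof. by move=> H hi; rewrite /Bcoef !(poch_single _ H hi) Re_quad. Qed.

Lemma diag_inv (R : rcfType) (z z' : R[i]) s M : is_part s ->
  \sum_(i < M.+1) (if add_ok s i then Fq z z' ((s ## i)%:R - i%:R) else 0)
  - \sum_(i < M.+1) (if rm_ok s i then Fq z z' ((s ## i)%:R - 1 - i%:R) else 0)
  = Fq z z' ((s ## M)%:R - M%:R) + 2 * \sum_(i < M) (s ## i)%:R - M%:R ^+ 2
    + M%:R * (complex.Re z + complex.Re z')
    - (if rm_ok s M then Fq z z' ((s ## M)%:R - M%:R - 1) else 0).
Proof.
move=> ps; elim: M => [|M IH].
  rewrite !big_ord_recr !big_ord0 /= /add_ok /=.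
  by case: (rm_ok s 0); rewrite /Fq; ring.
rewrite !(big_ord_recr M.+1) /=.
have -> : forall a b c d : R, a + b - (c + d) = (a - c) + b - d by move=> *; ring.
rewrite IH big_ord_recr /= /add_ok /=.
have hd := part_desc M ps.
rewrite /rm_ok; case: (ltnP (s ## M.+1) (s ## M)) => h /=.
- rewrite /Fq -!natr1; case: ifP => _; ring.
- have e : s ## M.+1 = s ## M by lia.
  rewrite e /Fq -!natr1; case: ifP => _; ring.
Qed.

Ltac eqs := repeat (case: eqP; [ let e := fresh "e" in move=> e; repeat (move/succn_inj: e => e); try subst | move=> ?]).

Lemma diag_id (R : rcfType) (z z' : R[i]) s N : is_part s -> (size s < N)%N ->
  \sum_(i < N) (if add_ok s i then Fq z z' ((s ## i)%:R - i%:R) else 0)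
  - \sum_(i < N) (if rm_ok s i then Fq z z' ((s ## i)%:R - 1 - i%:R) else 0)
  = 2 * (psize s)%:R + complex.Re (z * z').
Proof.
case: N => [//|M] ps hM; rewrite diag_inv //.
have e0 : s ## M = 0%N by rewrite nth_default.
have -> : rm_ok s M = false by rewrite /rm_ok e0.
rewrite e0 /psize (@sumn_big s M) // natr_sum /Fq; ring.
Qed.

Lemma cond_eq s i j : is_part s -> i != j ->
  (add_ok s i && rm_ok (inc s i) j) = (rm_ok s j && add_ok (dec s j) i).
Proof.
move=> ps /eqP ne.
have d1 := part_desc j ps; have d2 := part_desc i ps; have d3 := part_desc i.-1 ps.
case hr: (rm_ok s j); last first.
  apply/negbTE; apply/negP => /andP[_]; move: hr; rewrite /rm_ok !inc_nth.
  move/negbT; repeat case: eqP => ?; lia.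
rewrite /= /add_ok /rm_ok !inc_nth; rewrite /add_ok !dec_nth //.
move: hr; rewrite /rm_ok; case: i ne d2 d3 => [|i] ne d2 d3 /=.
  by eqs; lia.
move=> hr; apply/idP/idP; eqs; lia.
Qed.

Lemma size_dec s j : (j < size s)%N -> (size (dec s j) <= size s)%N.
Proof.
move=> hj; rewrite /dec size_filter (leq_trans (count_size _ _)) // size_set_nth; lia.
Qed.

Lemma swap_eq s i j : is_part s -> i != j -> add_ok s i -> rm_ok (inc s i) j ->
  rm_ok s j /\ add_ok (dec s j) i /\ dec (inc s i) j = inc (dec s j) i.
Proof.
move=> ps ne hi hr.
have := cond_eq ps ne; rewrite hi hr /= => /esym/andP[hj hk].
split => //; split => //.
have pi := inc_part ps hi; have pj := dec_part ps hj.
apply: part_ext; [exact: dec_part | exact: inc_part | move=> k].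
rewrite dec_nth // !inc_nth dec_nth //.
move: hj ne; rewrite /rm_ok => hj /eqP ne; eqs; lia.
Qed.

Lemma diagA s i : is_part s -> add_ok s i -> rm_ok (inc s i) i /\ dec (inc s i) i = s.
Proof.
move=> ps hi; have pi := inc_part ps hi.
have hr : rm_ok (inc s i) i by rewrite /rm_ok !inc_nth eqxx; have := part_desc i ps; eqs; lia.
split => //; apply: part_ext => // [|k]; first exact: dec_part.
rewrite dec_nth // inc_nth; lia.
Qed.

Lemma diagB s i : is_part s -> rm_ok s i -> add_ok (dec s i) i /\ inc (dec s i) i = s.
Proof.
move=> ps hr; have pd := dec_part ps hr.
have h0 : (0 < s ## i)%N by move: hr; rewrite /rm_ok; lia.
have ha : add_ok (dec s i) i.
  rewrite /add_ok; case: i hr h0 {pd} => [//|i] hr h0 /=.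
  rewrite !dec_nth // eqxx; have := part_desc i ps; eqs; lia.
split => //; apply: part_ext => // [|k]; first exact: inc_part.
rewrite inc_nth dec_nth //; eqs; lia.
Qed.

Definition Dop (R : rcfType) (z z' : R[i]) (f : seq nat -> R) (mub : seq nat) : R :=
  \sum_(m <- add_cands mub | covers mub m) Bcoef z z' m mub * f m.

Section Core.
Variables (R : rcfType) (z z' : R[i]).

Definition Aij (s : seq nat) (g : seq nat -> R) (i j : nat) : R :=
  if add_ok s i && rm_ok (inc s i) j then Bcoef z z' (inc s i) s * g (dec (inc s i) j) else 0.
Definition Bij (s : seq nat) (g : seq nat -> R) (i j : nat) : R :=
  if rm_ok s j && add_ok (dec s j) i then Bcoef z z' (inc (dec s j) i) (dec s j) * g (inc (dec s j) i) else 0.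

Lemma offdiag s g i j : is_part s -> i != j -> Aij s g i j = Bij s g i j.
Proof.
move=> ps ne; rewrite /Aij /Bij -(cond_eq ps ne).
case hi: (add_ok s i) => //=; case hr: (rm_ok (inc s i) j) => //=.
have [hj [hk e]] := swap_eq ps ne hi hr.
rewrite e (@Bcoef_single _ _ _ _ _ i); last first.
- rewrite size_inc; lia.
- by move=> k; rewrite inc_nth.
rewrite (@Bcoef_single _ _ _ _ _ i); last first.
- rewrite size_inc; lia.
- by move=> k; rewrite inc_nth.
by rewrite dec_nth // (negbTE ne) subn0.
Qed.

Lemma diagAi s g i : is_part s ->
  Aij s g i i = if add_ok s i then Fq z z' ((s ## i)%:R - i%:R) * g s else 0.
Proof.
move=> ps; rewrite /Aij; case hi: (add_ok s i) => //=.
have [-> ->] := diagA ps hi.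
rewrite (@Bcoef_single _ _ _ _ _ i) // ?size_inc; [by move=> k; rewrite inc_nth | lia].
Qed.

Lemma diagBi s g i : is_part s ->
  Bij s g i i = if rm_ok s i then Fq z z' ((s ## i)%:R - 1 - i%:R) * g s else 0.
Proof.
move=> ps; rewrite /Bij; case hi: (rm_ok s i) => //=.
have [-> ->] := diagB ps hi.
have h0 : (0 < s ## i)%N by move: hi; rewrite /rm_ok; lia.
rewrite (@Bcoef_single _ _ _ _ _ i).
- by rewrite dec_nth // eqxx natrB.
- move=> k; rewrite dec_nth //; eqs; lia.
- exact: rm_ok_size.
Qed.

Lemma DU_UD s g : is_part s ->
  Dop z z' (p1mul g) s - p1mul (Dop z z' g) s = (2 * (psize s)%:R + complex.Re (z * z')) * g s.
Proof.
move=> ps; set N := (size s).+2.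
have hN1 : (size s < N)%N by rewrite /N.
have hN2 : (size s <= N)%N by rewrite /N; lia.
have e1 : Dop z z' (p1mul g) s = \sum_(i < N) \sum_(j < N) Aij s g i j.
  rewrite /Dop (add_sum _ ps hN1).
  rewrite big_mkcond; apply: eq_bigr => i _; rewrite /Aij.
  case: ifP => hi /=; last by rewrite big1.
  rewrite /p1mul (rm_sum _ _ (N:=N)); first last.
  - move: (add_ok_size ps hi); rewrite size_inc /N; move: (nat_of_ord i) => k; lia.
  - exact: inc_part.
  rewrite mulr_sumr big_mkcond; apply: eq_bigr => j _.
  by case: ifP => //; rewrite mulr0.
have e2 : p1mul (Dop z z' g) s = \sum_(i < N) \sum_(j < N) Bij s g i j.
  rewrite /p1mul (rm_sum _ ps hN2).
  rewrite big_mkcond exchange_big; apply: eq_bigr => j _; rewrite /Bij.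
  case: ifP => hj /=; last by rewrite big1.
  rewrite /Dop (add_sum _ _ (N:=N)); first last.
  - have := size_dec (rm_ok_size ps hj); rewrite /N; lia.
  - exact: dec_part.
  rewrite big_mkcond; apply: eq_bigr => i _.
  by case: ifP.
rewrite e1 e2 -sumrB.
have e3 : forall i : 'I_N, \sum_(j < N) Aij s g i j - \sum_(j < N) Bij s g i j
   = Aij s g i i - Bij s g i i.
  move=> i; rewrite (bigD1 i) //= [X in _ - X](bigD1 i) //=.
  rewrite (eq_bigr (fun j : 'I_N => Bij s g i j)); last first.
    by move=> j hj; apply: offdiag => //; rewrite eq_sym.
  by rewrite opprD addrACA subrr addr0.
rewrite (eq_bigr _ (fun i _ => e3 i)) sumrB.
rewrite (eq_bigr (fun i : 'I_N => if add_ok s i then Fq z z' ((s ## i)%:R - i%:R) * g s else 0));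
  last by move=> i _; exact: diagAi.
rewrite [X in _ - X](eq_bigr (fun i : 'I_N => if rm_ok s i then Fq z z' ((s ## i)%:R - 1 - i%:R) * g s else 0));
  last by move=> i _; exact: diagBi.
rewrite -(@diag_id R z z' s N) //.
rewrite mulrBl !mulr_suml; congr (_ - _); apply: eq_bigr => i _; by case: ifP => _; rewrite ?mul0r.
Qed.

End Core.

Lemma sum_neq0 (R : rcfType) (T : eqType) (s : seq T) (P : pred T) (F : T -> R) :
  \sum_(x <- s | P x) F x != 0 -> exists x, [/\ x \in s, P x & F x != 0].
Proof.
elim: s => [|x s IH]; first by rewrite big_nil eqxx.
rewrite big_cons; case: ifP => px H.
- case: (eqVneq (F x) 0) => e; last by exists x; rewrite mem_head.
  move: H; rewrite e add0r => /IH [y [ys py fy]]; exists y; by rewrite inE ys orbT.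
- have [y [ys py fy]] := IH H; exists y; by rewrite inE ys orbT.
Qed.

Lemma sum_delta (R : rcfType) (T : eqType) (s : seq T) (P : pred T) (F : T -> R) a :
  uniq s -> \sum_(x <- s | P x) F x * (x == a)%:R = if (a \in s) && P a then F a else 0.
Proof.
move=> us; rewrite big_mkcond /=; case: (boolP (a \in s)) => ha /=.
- rewrite (bigD1_seq a) //= eqxx mulr1 big1 ?addr0 //.
  by move=> x /negbTE hx; rewrite hx mulr0; case: ifP.
- rewrite big1_seq // => x /= xs; have -> : (x == a) = false.
    by apply/negbTE; apply: contraNneq ha => <-.
  by rewrite mulr0; case: ifP.
Qed.

Lemma BopE (R : rcfType) (z z' : R[i]) f nu : Bop z z' f nu =
  - (psize nu)%:R * ((psize nu)%:R - 1 + complex.Re (z * z')) * f nu + p1mul (Dop z z' f) nu.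
Proof. by []. Qed.

Lemma p1mul_nonpart (R : rcfType) (f : seq nat -> R) s : ~~ is_part s -> p1mul f s = 0.
Proof.
move=> hs; rewrite /p1mul big1 // => m hc; have [_ ps] := covers_part hc.
by rewrite ps in hs.
Qed.

Lemma Dop_nonpart (R : rcfType) (z z' : R[i]) (f : seq nat -> R) s : ~~ is_part s -> Dop z z' f s = 0.
Proof.
move=> hs; rewrite /Dop big1 // => m hc; have [ps _] := covers_part hc.
by rewrite ps in hs.
Qed.

Lemma covers_psize m n : covers m n -> psize n = (psize m).+1.
Proof. by case/and4P=> _ _ _ /eqP. Qed.

Unset Implicit Arguments.
Set Strict Implicit.

Theorem proposition5p5 (R : rcfType) (z z' : R[i]) (Hzz : admissible z z') :
  (* B_{z,z'} preserves the principal ideal (p_1 - 1) Lambda *)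
  (forall g : seq nat -> R, inLam g -> inIdeal (Bop z z' (p1m1 g))) /\
  (* the induced operator on Lambda° sends s°_mu to the stated expression *)
  (forall mu : seq nat, is_part mu ->
     inIdeal (fun nu => Bop z z' (schur R mu) nu - Bcirc_image z z' mu nu)).
Proof.
set Z := complex.Re (z * z').
split.
- move=> g [hg0 [S hS]]; exists (Bop z z' g); split.
  + split.
    * move=> s hs; rewrite BopE hg0 // p1mul_nonpart // mulr0 addr0 //.
    * exists (S ++ flatten [seq flatten [seq add_cands x | x <- rm_cands y] | y <- S]).
      move=> nu; rewrite BopE mem_cat; case: (eqVneq (g nu) 0) => [e|ne]; last by rewrite hS.
      rewrite e mulr0 add0r => /sum_neq0 [m [_ hc hm]].
      have [m' [_ hc' hm']] := sum_neq0 hm.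
      have hm'' : g m' != 0 by apply: contraNneq hm' => ->; rewrite mulr0.
      apply/orP; right; apply/flatten_mapP; exists m'; first exact: hS.
      apply/flatten_mapP; exists m; [exact: covers_mem_rm | exact: covers_mem_add].
  + move=> nu; rewrite /p1m1 !BopE.
    set n := (psize nu)%:R.
    have h1 : p1mul (Dop z z' (fun nu0 => p1mul g nu0 - g nu0)) nu =
      \sum_(m <- rm_cands nu | covers m nu) p1mul (Dop z z' g) m
      + \sum_(m <- rm_cands nu | covers m nu) (2 * (psize m)%:R + Z) * g m
      - \sum_(m <- rm_cands nu | covers m nu) Dop z z' g m.
      rewrite /p1mul -big_split -sumrB /=; apply: eq_bigr => m hc.
      have [pm _] := covers_part hc.
      have -> : Dop z z' (fun nu0 => p1mul g nu0 - g nu0) m = Dop z z' (p1mul g) m - Dop z z' g m.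
        by rewrite /Dop -sumrB; apply: eq_bigr => x _; rewrite mulrBr.
      by rewrite -(DU_UD z z' g pm) /p1mul; congr (_ - _); rewrite addrC subrK.
    have h2 : p1mul (Bop z z' g) nu =
      \sum_(m <- rm_cands nu | covers m nu) (- (psize m)%:R * ((psize m)%:R - 1 + Z) * g m)
      + \sum_(m <- rm_cands nu | covers m nu) p1mul (Dop z z' g) m.
      by rewrite /p1mul -big_split.
    have key : \sum_(m <- rm_cands nu | covers m nu) (2 * (psize m)%:R + Z) * g m =
      \sum_(m <- rm_cands nu | covers m nu) (- (psize m)%:R * ((psize m)%:R - 1 + Z) * g m)
      + n * (n - 1 + Z) * \sum_(m <- rm_cands nu | covers m nu) g m.
      rewrite mulr_sumr -big_split; apply: eq_bigr => m hc /=.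
      rewrite /n (covers_psize hc) -natr1; ring.
    rewrite h1 h2 key /p1mul -/Z; ring.
- move=> mu pmu; exists (Dop z z' (schur R mu)); split.
  + split; first by move=> s hs; exact: Dop_nonpart.
    exists (rm_cands mu) => nu; rewrite /Dop /schur sum_delta ?undup_uniq //.
    case: ifP => [/andP[_ hc] _|]; last by rewrite eqxx.
    exact: covers_mem_rm.
  + move=> nu; rewrite /p1m1 BopE /Bcirc_image -/Z.
    have -> : \sum_(m <- rm_cands mu | covers m mu) Bcoef z z' mu m * schur R m nu
            = Dop z z' (schur R mu) nu.
      rewrite /Dop /schur sum_delta ?undup_uniq //.
      rewrite (eq_bigr (fun m => Bcoef z z' mu m * (m == nu)%:R)); last first.
        by move=> m _; rewrite eq_sym.
      rewrite sum_delta ?undup_uniq //.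
      case hc: (covers nu mu); last by rewrite !andbF.
      by rewrite covers_mem_add // covers_mem_rm.
    rewrite /schur; case: (eqVneq nu mu) => [->|ne]; first ring.
    rewrite !mulr0 !add0r; ring.
Qed.
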